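(* Let $q=2^m$ with $m\ge 4$ even. Then the subfield subcode $\mathcal C_{\{3,5\}}^{\perp}|_{\mathrm{GF}(q)}$ has parameters $[q+1,q-3,4]_q$.
   Context: Let $U_{q+1}$ be the set of $(q+1)$-th roots of unity in $\mathrm{GF}(q^2)$; coordinates of vectors of length $q+1$ are indexed by $U_{q+1}$ (in a fixed order). Define the code over $\mathrm{GF}(q^2)$ $\mathcal C_{\{3,5\}}=\{(a_3u^3+a_{q-2}u^{q-2}+a_5u^5+a_{q-4}u^{q-4})_{u\in U_{q+1}}: a_3,a_{q-2},a_5,a_{q-4}\in\mathrm{GF}(q^2)\}$. $\mathcal C_{\{3,5\}}^\perp$ is its dual with respect to the standard inner product $\sum_u c_uw_u$, and $\mathcal C^\perp_{\{3,5\}}|_{\mathrm{GF}(q)}=\mathcal C^\perp_{\{3,5\}}\cap\mathrm{GF}(q)^{q+1}$. $[n,k,d]_q$ denotes a linear code over $\mathrm{GF}(q)$ of length $n$, dimension $k$, minimum distance $d$. *)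

(* Defs.v *)
From HB Require Import structures.
From mathcomp Require Import all_boot all_order all_algebra all_field.
Set Implicit Arguments. Unset Strict Implicit. Unset Printing Implicit Defensive.
Import GRing.Theory.
Local Open Scope ring_scope.

Definition Uset (F : finFieldType) (q : nat) : {set F} :=
  [set u : F | u ^+ q.+1 == 1].

(* The code length n = |U_{q+1}|; coordinates indexed by 'I_n via enum_val
   (a fixed order of U_{q+1}). *)
Notation ulen F q := #|Uset F q|.

(* The coordinate of the codeword of C_{3,5} with coefficients
   (a3, a_{q-2}, a5, a_{q-4}) at position u. *)
Definition c35 (F : finFieldType) (q : nat) (a3 aq2 a5 aq4 u : F) : F :=
  a3 * u ^+ 3 + aq2 * u ^+ (q - 2) + a5 * u ^+ 5 + aq4 * u ^+ (q - 4).

(* Subfield subcode C_{3,5}^perp |_{GF(q)}: GF(q) is realized as a finite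
   field K embedded into F by the field morphism iota; a vector over GF(q)
   of length n is a row vector c : 'rV[K]_n, and it lies in the dual of
   C_{3,5} iff sum_u c_u w_u = 0 for every codeword w of C_{3,5}. *)
Definition subcode35 (K F : finFieldType) (iota : {rmorphism K -> F}) (q : nat)
  : {set 'rV[K]_(ulen F q)} :=
  [set c : 'rV[K]_(ulen F q) | [forall a3 : F, forall aq2 : F, forall a5 : F,
     forall aq4 : F,
       \sum_(i < ulen F q) c35 q a3 aq2 a5 aq4 (enum_val i) * iota (c ord0 i)
         == 0]].

Definition wt (K : finFieldType) (n : nat) (c : 'rV[K]_n) : nat :=
  #|[set i : 'I_n | c ord0 i != 0]|.

Definition is_linear_code (K : finFieldType) (n : nat) (C : {set 'rV[K]_n}) :=
  0 \in C /\ forall (a : K) (x y : 'rV[K]_n), x \in C -> y \in C -> a *: x + y \in C.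

Definition code_dim (K : finFieldType) (n : nat) (C : {set 'rV[K]_n}) : nat :=
  \dim <<enum C>>%VS.

Definition min_dist_is (K : finFieldType) (n : nat) (C : {set 'rV[K]_n}) (d : nat) :=
  (exists2 c, c \in C & c != 0 /\ wt c = d) /\
  (forall c, c \in C -> c != 0 -> (d <= wt c)%N).

(* Main.v *)
Require Import Defs.
From HB Require Import structures.
From mathcomp Require Import all_boot all_order all_algebra all_field.
From mathcomp Require Import ring zify.
Set Implicit Arguments. Unset Strict Implicit. Unset Printing Implicit Defensive.
Import GRing.Theory.
Local Open Scope ring_scope.
Lemma roots_card (F : finFieldType) (A : {set F}) (p : {poly F}) :
  p != 0 -> (forall x, x \in A -> root p x) -> (#|A| < size p)%N.
Proof.
move=> p0 hA; rewrite cardE; apply: max_poly_roots => //.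
  by apply/allP => x; rewrite mem_enum; apply: hA.
exact: enum_uniq.
Qed.

Lemma size_XnsubC_ (F : fieldType) (k : nat) (c : F) : (0 < k)%N ->
  size ('X^k - c%:P : {poly F}) = k.+1.
Proof. by move=> k0; rewrite size_XnsubC. Qed.

Section Main.
Variables (m : nat) (K F : finFieldType) (iota : {rmorphism K -> F}).
Hypotheses (m4 : (4 <= m)%N) (mev : ~~ odd m) (cK : #|K| = (2 ^ m)%N)
  (cF : #|F| = (2 ^ m * 2 ^ m)%N).
Local Notation q := (2 ^ m)%N.

Lemma q_ge16 : (16 <= q)%N.
Proof. by rewrite (_ : 16 = 2 ^ 4)%N // leq_exp2l. Qed.

Lemma q_mod3 : (q %% 3 = 1)%N.
Proof.
have [k ->] : exists k, m = (k.*2)%N.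
  by exists m./2; rewrite -{1}(odd_double_half m) (negbTE mev).
by rewrite -addnn expnD -expnMn -modnXm /= exp1n.
Qed.

Lemma char2 : (2 : F) = 0.
Proof.
have h : (2 \in [pchar F])%N.
  by apply: (@card_finPcharP _ 2 (m + m)); rewrite // expnD.
exact: pcharf0 h.
Qed.

Lemma add2 (x : F) : x + x = 0.
Proof. by rewrite -mulr2n -mulr_natr char2 mulr0. Qed.

Lemma oppF (x : F) : - x = x.
Proof. by apply/eqP; rewrite eq_sym -subr_eq0 opprK add2. Qed.

Lemma addF_eq0 (x y : F) : (x + y == 0) = (x == y).
Proof. by rewrite -{1}(oppF y) subr_eq0. Qed.

Lemma sqrD (x y : F) : (x + y) ^+ 2 = x ^+ 2 + y ^+ 2.
Proof. have h := char2. ring: h. Qed.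

Definition fr (x : F) := x ^+ q.

Lemma frD_gen k (x y : F) : (x + y) ^+ (2 ^ k) = x ^+ (2 ^ k) + y ^+ (2 ^ k).
Proof.
elim: k x y => [|k IH] x y; first by rewrite !expr1.
by rewrite expnS !exprM sqrD IH.
Qed.

Lemma frD x y : fr (x + y) = fr x + fr y. Proof. exact: frD_gen. Qed.
Lemma frM x y : fr (x * y) = fr x * fr y. Proof. exact: exprMn. Qed.
Lemma fr0 : fr 0 = 0. Proof. by rewrite /fr expr0n expn_eq0. Qed.
Lemma fr1 : fr 1 = 1. Proof. by rewrite /fr expr1n. Qed.
Lemma frX x k : fr (x ^+ k) = fr x ^+ k. Proof. by rewrite /fr -!exprM mulnC. Qed.
Lemma frV x : fr (x^-1) = (fr x)^-1. Proof. by rewrite /fr exprVn. Qed.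
Lemma frK x : fr (fr x) = x. Proof. by rewrite /fr -exprM -cF expf_card. Qed.
Lemma frN x : fr (- x) = - fr x. Proof. by rewrite !oppF. Qed.
Lemma frB x y : fr (x - y) = fr x - fr y. Proof. by rewrite frD frN. Qed.

Lemma fr_sum (I : Type) (r : seq I) (P : pred I) (G : I -> F) :
  fr (\sum_(i <- r | P i) G i) = \sum_(i <- r | P i) fr (G i).
Proof. exact: (big_morph fr frD fr0). Qed.

Lemma fr_iota k : fr (iota k) = iota k.
Proof. by rewrite /fr -rmorphXn -cK expf_card. Qed.

Lemma fixK x : fr x = x -> exists k, x = iota k.
Proof.
move=> hx; case: (pickP (fun k => iota k == x)) => [k /eqP <- | hn]; first by exists k.
exfalso.
have inj := fmorph_inj iota.
have : (#|x |: [set iota k | k in K]| < size (('X^q - 'X)%R : {poly F}))%N.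
  apply: roots_card.
    rewrite -size_poly_eq0 size_polyDl ?size_polyXn // size_polyN size_polyX ltnS.
    exact: leq_trans q_ge16.
  move=> y; rewrite !inE => /orP [/eqP -> | /imsetP [k _ ->]];
    rewrite rootE !hornerE -/(fr _) ?hx ?fr_iota subrr //.
rewrite cardsU1 card_imset // cK size_polyDl ?size_polyXn ?size_polyN ?size_polyX ?ltnS; last exact: leq_trans q_ge16.
suff -> : x \notin [set iota k | k in K] by rewrite ltnn.
by apply/imsetP => [[k _ e]]; have := hn k; rewrite -e eqxx.
Qed.

Definition iinv (x : F) : K := odflt 0 [pick k | iota k == x].

Lemma iinvK x : fr x = x -> iota (iinv x) = x.
Proof.
move/fixK => [k ->]; rewrite /iinv; case: pickP => [k' /eqP //|/(_ k)].
by rewrite eqxx.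
Qed.


Local Notation U := (Uset F q).

Lemma inU u : (u \in U) = (u ^+ q.+1 == 1).
Proof. by rewrite inE. Qed.

Lemma U_neq0 u : u \in U -> u != 0.
Proof. by rewrite inU => /eqP h; apply/eqP => e; move: h; rewrite e expr0n /= => /eqP; rewrite eq_sym oner_eq0. Qed.

Lemma frU u : u \in U -> fr u = u^-1.
Proof.
move=> hu; have u0 := U_neq0 hu; move: hu; rewrite inU exprSr => /eqP h.
by rewrite -[fr u]mulr1 -(mulfV u0) mulrA h mul1r.
Qed.

Lemma UV u : u \in U -> u^-1 \in U.
Proof. by rewrite !inU exprVn => /eqP ->; rewrite invr1. Qed.

Lemma UM u v : u \in U -> v \in U -> u * v \in U.
Proof. by rewrite !inU exprMn => /eqP -> /eqP ->; rewrite mulr1. Qed.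

Lemma U1 : 1 \in U. Proof. by rewrite inU expr1n. Qed.

Lemma expU u j k : u \in U -> (j + k = q.+1)%N -> u ^+ j = u^-1 ^+ k.
Proof.
move=> hu e; have u0 := U_neq0 hu; move: hu; rewrite inU -e exprD => /eqP h.
by rewrite exprVn -[u ^+ j]mulr1 -(mulfV (expf_neq0 k u0)) mulrA h mul1r.
Qed.

Lemma frU3 u k : u \in U -> fr (u^-1 ^+ k) = u ^+ k.
Proof. by move=> hu; rewrite frX frV frU // invrK. Qed.

Lemma frU3' u k : u \in U -> fr (u ^+ k) = u^-1 ^+ k.
Proof. by move=> hu; rewrite frX frU. Qed.

Lemma cube_inj u v : u \in U -> v \in U -> u ^+ 3 = v ^+ 3 -> u = v.
Proof.
move=> hu hv e.
have [j hj] : exists j, q.+1 = (3 * j + 2)%N.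
  exists (q %/ 3)%N; rewrite {1}(divn_eq q 3) q_mod3; lia.
have u0 := U_neq0 hu; have v0 := U_neq0 hv.
move: hu hv; rewrite !inU hj (exprD u) (exprD v) (exprM u) (exprM v) e => /eqP hu /eqP hv.
have e2 : u ^+ 2 = v ^+ 2.
  apply: (mulfI (expf_neq0 j (expf_neq0 3 v0))); by rewrite hu hv.
have : (u + v) ^+ 2 == 0 by rewrite sqrD e2 add2.
rewrite expf_eq0 /= addF_eq0 => /eqP //.
Qed.

Lemma sqr_inj (x y : F) : x ^+ 2 = y ^+ 2 -> x = y.
Proof.
move=> e; have : (x + y) ^+ 2 == 0 by rewrite sqrD e add2.
by rewrite expf_eq0 /= addF_eq0 => /eqP.
Qed.

Lemma card_U : #|U| = q.+1.
Proof.
apply/eqP; rewrite eqn_leq; apply/andP; split.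
  rewrite -ltnS -(size_XnsubC_ (1 : F) (ltn0Sn q)); apply: roots_card.
    by rewrite -size_poly_eq0 size_XnsubC_.
  by move=> u; rewrite inU rootE !hornerE => /eqP ->; rewrite subrr.
pose A := [set x : F | x != 0].
have cA : #|A| = (q * q).-1.
  by rewrite -cF -(cardC1 0); apply: eq_card => x; rewrite !inE.
pose g (x : F) := x ^+ q.-1.
have gU : forall x, x \in A -> g x \in U.
  move=> x; rewrite inE => x0; rewrite inU /g -exprM.
  have : x ^+ (q * q) = x by rewrite -cF expf_card.
  have qq : (q * q = (q.-1 * q.+1).+1)%N.
    have := q_ge16; set Q := q; move=> h; rewrite -(prednK (_ : 0 < Q)%N) /=; last lia.
    set P := Q.-1; nia.
  rewrite qq exprS => h; apply/eqP; apply: (mulfI x0); by rewrite h mulr1.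
have h1 : (#|A| <= #|U| * q.-1)%N.
  rewrite -sum1_card (partition_big g (mem U)) //=.
  rewrite -sum_nat_const; apply: leq_sum => c cU.
  have -> : (\sum_(i in A | g i == c) 1 = #|[set x in A | g x == c]|)%N.
    by rewrite -sum1_card; apply: eq_bigl => x; rewrite !inE.
  have q1 : (0 < q.-1)%N by have := q_ge16; lia.
  rewrite -ltnS -(size_XnsubC_ c q1); apply: roots_card.
    by rewrite -size_poly_eq0 size_XnsubC_.
  by move=> x; rewrite !inE rootE !hornerE => /andP [_ /eqP <-]; rewrite subrr.
move: h1; rewrite cA; have := q_ge16; set Q := q => hq h1.
have : (Q.-1 * Q.+1 <= Q.-1 * #|U|)%N.
  suff -> : (Q.-1 * Q.+1 = (Q * Q).-1)%N by rewrite mulnC.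
  rewrite -(prednK (_ : 0 < Q)%N) /=; last lia. set P := Q.-1; nia.
by rewrite leq_pmul2l //; lia.
Qed.
Lemma natq0 : (q%:R : F) = 0.
Proof.
have -> : q = (2 * 2 ^ m.-1)%N by rewrite -expnS prednK //; lia.
by rewrite natrM char2 mul0r.
Qed.

Lemma sumU0 : \sum_(u in U) (1 : F) = 1.
Proof. by rewrite sumr_const card_U -addn1 mulrnDr natq0 add0r. Qed.

Lemma sumU k : (0 < k < q.+1)%N -> \sum_(u in U) u ^+ k = 0 :> F.
Proof.
move=> /andP [k0 kq].
have [z zU zk] : exists2 z, z \in U & z ^+ k != 1.
  case: (pickP (fun z => (z \in U) && (z ^+ k != 1))) => [z /andP [h1 h2] | hn].
    by exists z.
  exfalso.
  have : (#|U| < size (('X^k - 1)%R : {poly F}))%N.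
    apply: roots_card; first by rewrite -size_poly_eq0 size_XnsubC_.
    move=> u uU; have := hn u; rewrite uU /= => /negbFE /eqP hu.
    by rewrite rootE !hornerE hu subrr.
  by rewrite size_XnsubC_ // card_U ltnS leqNgt kq.
have z0 := U_neq0 zU.
have e : \sum_(u in U) u ^+ k = z ^+ k * \sum_(u in U) u ^+ k.
  rewrite mulr_sumr (reindex_inj (mulfI z0)) /=.
  apply: eq_big => [u|u _]; last by rewrite exprMn.
  apply/idP/idP => h; last exact: UM.
  by rewrite -(mul1r u) -(mulVf z0) -mulrA; apply: UM => //; apply: UV.
apply/eqP; move: e => /eqP; rewrite -subr_eq0 -{1}(mul1r (\sum_(u in U) _)) -mulrBl.
by rewrite mulf_eq0 subr_eq0 eq_sym (negbTE zk).
Qed.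

Lemma sumUV k : (0 < k < q.+1)%N -> \sum_(u in U) u^-1 ^+ k = 0 :> F.
Proof.
move=> hk; rewrite -[RHS](sumU hk); rewrite [LHS](reindex_inj invr_inj) /=.
apply: eq_big => [u|u _]; last by rewrite invrK.
by apply/idP/idP => h; [rewrite -(invrK u); apply: UV | apply: UV].
Qed.

Local Notation n := #|U|.

Definition Sk (c : 'rV[K]_n) (h : F -> F) :=
  \sum_(i < n) iota (c ord0 i) * h (enum_val i).

Lemma frS (c : 'rV[K]_n) k : fr (Sk c (fun u => u ^+ k)) = Sk c (fun u => u^-1 ^+ k).
Proof.
rewrite /Sk fr_sum; apply: eq_bigr => i _.
by rewrite frM fr_iota frU3' // enum_valP.
Qed.

Lemma sum_c35 (c : 'rV[K]_n) a3 aq2 a5 aq4 :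
  \sum_(i < n) c35 q a3 aq2 a5 aq4 (enum_val i) * iota (c ord0 i) =
  a3 * Sk c (fun u => u ^+ 3) + aq2 * fr (Sk c (fun u => u ^+ 3)) +
  a5 * Sk c (fun u => u ^+ 5) + aq4 * fr (Sk c (fun u => u ^+ 5)).
Proof.
rewrite !frS /Sk !mulr_sumr -!big_split /=; apply: eq_bigr => i _.
have hu := enum_valP i.
rewrite /c35 (expU hu (_ : (q - 2 + 3 = q.+1)%N)); last by have := q_ge16; lia.
rewrite (expU hu (_ : (q - 4 + 5 = q.+1)%N)); last by have := q_ge16; lia.
ring.
Qed.

Local Notation S3 c := (Sk c (fun u => u ^+ 3)).
Local Notation S5 c := (Sk c (fun u => u ^+ 5)).

Lemma memC (c : 'rV[K]_n) : (c \in subcode35 iota q) = (S3 c == 0) && (S5 c == 0).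
Proof.
rewrite inE; apply/idP/andP.
  move=> /forallP h; split.
    by have := h 1 => /forallP /(_ 0) /forallP /(_ 0) /forallP /(_ 0);
      rewrite sum_c35 !mul0r !addr0 mul1r.
  by have := h 0 => /forallP /(_ 0) /forallP /(_ 1) /forallP /(_ 0);
    rewrite sum_c35 !mul0r !addr0 add0r mul1r.
move=> [/eqP h3 /eqP h5]; apply/forallP => a3; apply/forallP => aq2;
  apply/forallP => a5; apply/forallP => aq4.
by rewrite sum_c35 h3 h5 fr0 !mulr0 !addr0.
Qed.

Lemma SkD (a : K) (x y : 'rV[K]_n) h :
  Sk (a *: x + y) h = iota a * Sk x h + Sk y h.
Proof.
rewrite /Sk mulr_sumr -big_split /=; apply: eq_bigr => i _.
by rewrite !mxE rmorphD rmorphM /=; ring.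
Qed.

Lemma Sk0 h : Sk 0 h = 0.
Proof. by rewrite /Sk big1 // => i _; rewrite mxE rmorph0 mul0r. Qed.

Lemma linC : is_linear_code (subcode35 iota q).
Proof.
split; first by rewrite memC !Sk0 eqxx.
move=> a x y; rewrite !memC => /andP [/eqP x3 /eqP x5] /andP [/eqP y3 /eqP y5].
by rewrite !SkD x3 x5 y3 y5 mulr0 addr0 eqxx.
Qed.
Lemma Sk_row (g : F -> K) h :
  Sk (\row_i g (enum_val i)) h = \sum_(u in U) iota (g u) * h u.
Proof. by rewrite [RHS]big_enum_val; apply: eq_bigr => i _; rewrite mxE. Qed.

Lemma surj (ga de : F) : exists c : 'rV[K]_n, S3 c = ga /\ S5 c = de.
Proof.
pose z (u : F) := ga * u^-1 ^+ 3 + de * u^-1 ^+ 5.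
exists (\row_i iinv (z (enum_val i) + fr (z (enum_val i)))).
have e : forall u, u \in U -> iota (iinv (z u + fr (z u))) =
    ga * u^-1 ^+ 3 + de * u^-1 ^+ 5 + fr ga * u ^+ 3 + fr de * u ^+ 5.
  move=> u hu; rewrite iinvK; last by rewrite frD frK addrC.
  by rewrite /z frD (frM ga) (frM de) !frU3 //; ring.
rewrite !(Sk_row (fun u => iinv (z u + fr (z u)))); split.
  rewrite (eq_bigr (fun u => ga * 1 + de * u^-1 ^+ 2 + fr ga * u ^+ 6 + fr de * u ^+ 8)).
    rewrite !big_split /= -!mulr_sumr sumU0 sumUV ?sumU //; try (apply/andP; split => //; have := q_ge16; lia).
    by rewrite !mulr0 !addr0 mulr1.
  move=> u hu; rewrite e //; have u0 := U_neq0 hu.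
  rewrite !exprVn; field; by rewrite ?expf_neq0.
rewrite (eq_bigr (fun u => ga * u ^+ 2 + de * 1 + fr ga * u ^+ 8 + fr de * u ^+ 10)).
  rewrite !big_split /= -!mulr_sumr sumU0 ?sumU //; try (apply/andP; split => //; have := q_ge16; lia).
  by rewrite !mulr0 !addr0 add0r mulr1.
move=> u hu; rewrite e //; have u0 := U_neq0 hu.
rewrite !exprVn; field; by rewrite ?expf_neq0.
Qed.

Lemma SkA (x y : 'rV[K]_n) h : Sk (x + y) h = Sk x h + Sk y h.
Proof. by rewrite -{1}(scale1r x) SkD rmorph1 mul1r. Qed.

Lemma SkN (x : 'rV[K]_n) h : Sk (- x) h = - Sk x h.
Proof.
by rewrite -[- x]addr0 -scaleN1r SkD Sk0 addr0 rmorphN rmorph1 mulN1r.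
Qed.

Local Notation C := (subcode35 iota q).

Lemma card_C : (#|C| * q ^ 4 = q ^ q.+1)%N.
Proof.
pose phi (c : 'rV[K]_n) := (S3 c, S5 c).
have fib : forall y : F * F, #|[set c | phi c == y]| = #|C|.
  move=> [ga de]; have [c0 [h3 h5]] := surj ga de.
  have -> : [set c | phi c == (ga, de)] = [set c0 + c | c in C].
    apply/setP => d; rewrite inE; apply/idP/imsetP.
      move=> /eqP [d3 d5]; exists (d - c0); last by rewrite addrC subrK.
      by rewrite memC !SkA !SkN d3 d5 h3 h5 !subrr eqxx.
    move=> [c]; rewrite memC => /andP [/eqP c3 /eqP c5] ->.
    by rewrite /phi !SkA c3 c5 h3 h5 !addr0.
  by rewrite card_imset //; apply: addrI.
have : #|{: 'rV[K]_n}| = (#|{: F * F}| * #|C|)%N.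
  transitivity (\sum_(c : 'rV[K]_n) 1)%N; first by rewrite sum1_card.
  rewrite (partition_big phi predT) //=.
  rewrite -sum_nat_const; apply: eq_bigr => y _; rewrite -(fib y) -sum1_card.
  by apply: eq_bigl => x; rewrite !inE.
rewrite card_mx card_prod cF cK mul1n => e0.
have e : (q ^ q.+1 = q * q * (q * q) * #|C|)%N by rewrite -[in LHS]card_U.
rewrite e (_ : (q * q * (q * q))%N = q ^ 4)%N; last by rewrite !expnS expn0 muln1 !mulnA.
by rewrite mulnC.
Qed.

Lemma span_sub (s : seq 'rV[K]_n) v :
  {subset s <= C} -> v \in <<s>>%VS -> v \in C.
Proof.
have [C0 Clin] := linC.
elim: s v => [|x s IH] v hs.
  by rewrite span_nil memv0 => /eqP ->.
rewrite span_cons => /memv_addP [a /vlineP [k ->] [b hb ->]].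
rewrite -[k *: x + b]/(k *: x + b); apply: Clin; first by apply: hs; rewrite mem_head.
by apply: IH => // y ys; apply: hs; rewrite in_cons ys orbT.
Qed.

Lemma dim_C : code_dim C = (q - 3)%N.
Proof.
rewrite /code_dim.
have e : #|(<<enum C>>%VS : {vspace 'rV[K]_n})| = #|C|.
  apply: eq_card => v; apply/idP/idP => h.
    by apply: (span_sub (s := enum C)) => // y; rewrite mem_enum.
  by apply: memv_span; rewrite mem_enum.
have := card_C; rewrite -e card_vspace cK.
rewrite (_ : q.+1 = (q - 3) + 4)%N; last by have := q_ge16; lia.
rewrite -expnD => /eqP; rewrite eqn_exp2l; last by have := q_ge16; lia.
by rewrite eqn_add2r => /eqP.
Qed.
Definition Tf (u1 u2 u3 : F) :=
  u1^+4*u2^+3 + u2^+4*u1^+3 + u1^+4*u3^+3 + u3^+4*u1^+3 + u2^+4*u3^+3 + u3^+4*u2^+3.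

Lemma I3 (u1 u2 u3 W1 W2 W3 : F) : u1 * W1 = 1 -> u2 * W2 = 1 -> u3 * W3 = 1 ->
  Tf u1 u2 u3 + (u1*u2)^+4*u3^+6 * Tf W1 W2 W3 =
  (u1+u2)*(u1*u2+u3^+2)*(u1+u3)^+2*(u2+u3)^+2.
Proof.
move=> h1 h2 h3; apply/eqP; rewrite -subr_eq0; apply/eqP.
have g1 : u1*W1 - 1 = 0 by rewrite h1 subrr.
have g2 : u2*W2 - 1 = 0 by rewrite h2 subrr.
have g3 : u3*W3 - 1 = 0 by rewrite h3 subrr.
transitivity ((u1*W1 - 1) * (u2^+4*u3^+6*W3^+3 + u2^+4*u3^+6*W2^+3 + u1*u2^+4*u3^+6*W3^+4 + u1*u2^+4*u3^+6*W2^+4 + u1*u2^+4*u3^+6*W1*W3^+3 + u1*u2^+4*u3^+6*W1*W2^+3 + u1^+2*u2^+4*u3^+6*W1*W3^+4 + u1^+2*u2^+4*u3^+6*W1*W2^+4 + u1^+2*u2^+4*u3^+6*W1^+2*W3^+3 + u1^+2*u2^+4*u3^+6*W1^+2*W2^+3 + u1^+3*u2^+4*u3^+6*W1^+2*W3^+4 + u1^+3*u2^+4*u3^+6*W1^+2*W2^+4 + u1^+3*u2^+4*u3^+6*W1^+3*W3^+3 + u1^+3*u2^+4*u3^+6*W1^+3*W2^+3) + (u2*W2 - 1) * (u2*u3^+6 + u2^+2*u3^+6*W2 + u2^+3*u3^+6*W2^+2 + u1*u3^+6 + u1*u2*u3^+6*W2 + u1*u2^+2*u3^+6*W2^+2 +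 u1*u2^+3*u3^+6*W2^+3 + u1^+4*u3^+6*W3^+3 + u1^+4*u2*u3^+6*W3^+4 + u1^+4*u2*u3^+6*W2*W3^+3 + u1^+4*u2^+2*u3^+6*W2*W3^+4 + u1^+4*u2^+2*u3^+6*W2^+2*W3^+3 + u1^+4*u2^+3*u3^+6*W2^+2*W3^+4 + u1^+4*u2^+3*u3^+6*W2^+3*W3^+3) + (u3*W3 - 1) * (u2^+4*u3^+3 + u2^+4*u3^+4*W3 + u2^+4*u3^+5*W3^+2 + u1*u2^+4*u3^+2 + u1*u2^+4*u3^+3*W3 + u1*u2^+4*u3^+4*W3^+2 + u1*u2^+4*u3^+5*W3^+3 + u1^+4*u3^+3 + u1^+4*u3^+4*W3 + u1^+4*u3^+5*W3^+2 + u1^+4*u2*u3^+2 + u1^+4*u2*u3^+3*W3 + u1^+4*u2*u3^+4*W3^+2 + u1^+4*u2*u3^+5*W3^+3) + 2 * (- u2^+2*u3^+5 + u2^+4*u3^+3 - 2%:R*u1*u2*u3^+5 - 3%:R*u1*u2^+2*u3^+4 - 2%:R*u1*u2^+3*u3^+3 - u1^+2*u3^+5 - 3%:R*u1^+2*u2*u3^+4 - 4%:R*u1^+2*u2^+2*u3^+3 - 3%:R*u1^+2*u2^+3*u3^+2 - u1^+2*u2^+4*u3 - 2%:R*u1^+3*u2*u3^+3 - 3%:R*u1^+3*u2^+2*u3^+2 - 2%:R*u1^+3*u2^+3*u3 + u1^+4*u3^+3 - u1^+4*u2^+2*u3)).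
  rewrite /Tf; ring.
rewrite g1 g2 g3 char2; ring.
Qed.

Lemma I4 (u1 u2 u3 : F) : u1 * u2 = u3 ^+ 2 ->
  Tf u1 u2 u3 = u3^+3*(u1+u2)^+3*(u1+u2+u3).
Proof.
move=> h; apply/eqP; rewrite -subr_eq0; apply/eqP.
have g : u1 * u2 - u3 ^+ 2 = 0 by rewrite h subrr.
transitivity ((u1*u2 - u3^+2) * (- 6%:R*u3^+5 - 2%:R*u2*u3^+4 - 4%:R*u2^+2*u3^+3 - 2%:R*u1*u3^+4 - 6%:R*u1*u2*u3^+3 + u1*u2^+2*u3^+2 - 4%:R*u1^+2*u3^+3 + u1^+2*u2*u3^+2 + u1^+2*u2^+3 + u1^+3*u2^+2) + 2 * (- 3%:R*u3^+7 - u2*u3^+6 - 2%:R*u2^+2*u3^+5 - u1*u3^+6 - 2%:R*u1^+2*u3^+5)).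
  rewrite /Tf; ring.
by rewrite g char2 !mul0r addr0.
Qed.

Lemma frTf (u1 u2 u3 : F) : u1 \in U -> u2 \in U -> u3 \in U ->
  fr (Tf u1 u2 u3) = Tf u1^-1 u2^-1 u3^-1.
Proof.
have frMX : forall (a b : F) i j, fr (a ^+ i * b ^+ j) = fr a ^+ i * fr b ^+ j.
  by move=> a b i j; rewrite frM !frX.
by move=> h1 h2 h3; rewrite /Tf !frD !frMX !frU.
Qed.

Lemma Tnz (u1 u2 u3 : F) : u1 \in U -> u2 \in U -> u3 \in U ->
  u1 != u2 -> u1 != u3 -> u2 != u3 -> Tf u1 u2 u3 != 0.
Proof.
move=> h1 h2 h3 d12 d13 d23; apply/negP => /eqP T0.
have T0' : Tf u1^-1 u2^-1 u3^-1 = 0 by rewrite -frTf // T0 fr0.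
have := I3 (mulfV (U_neq0 h1)) (mulfV (U_neq0 h2)) (mulfV (U_neq0 h3)).
rewrite T0 T0' mulr0 addr0 => /esym /eqP.
rewrite !mulf_eq0 !addF_eq0 (negbTE d12) (negbTE d13) (negbTE d23) /= !orbF.
move=> /eqP e; move: T0; rewrite I4 //.
move=> /eqP; rewrite !mulf_eq0 addF_eq0 (negbTE d12) (negbTE (U_neq0 h3)) /= ?orbF.
move=> /eqP s0.
have : u1 * (u1 + u2 + u3) = 0 by rewrite s0 mulr0.
have -> : u1 * (u1 + u2 + u3) = u1 ^+ 2 + u1 * u3 + u3 ^+ 2.
  rewrite -e; have h := char2; ring: h.
move=> c0; have : u1 ^+ 3 = u3 ^+ 3.
  apply/eqP; rewrite -addF_eq0.
  have -> : u1 ^+ 3 + u3 ^+ 3 = (u1 + u3) * (u1 ^+ 2 + u1 * u3 + u3 ^+ 2).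
    have h := char2; ring: h.
  by rewrite c0 mulr0.
by move/(cube_inj h1 h3)/eqP; rewrite (negbTE d13).
Qed.

Lemma core3 (a1 a2 a3 u1 u2 u3 : F) :
  fr a1 = a1 -> fr a2 = a2 -> fr a3 = a3 ->
  u1 \in U -> u2 \in U -> u3 \in U ->
  u1 != u2 -> u1 != u3 -> u2 != u3 ->
  a1 * u1 ^+ 3 + a2 * u2 ^+ 3 + a3 * u3 ^+ 3 = 0 ->
  a1 * u1 ^+ 5 + a2 * u2 ^+ 5 + a3 * u3 ^+ 5 = 0 -> a1 = 0.
Proof.
move=> f1 f2 f3 h1 h2 h3 d12 d13 d23 E1 E2.
have E3 : a1 * u1^-1 ^+ 3 + a2 * u2^-1 ^+ 3 + a3 * u3^-1 ^+ 3 = 0.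
  by rewrite -[a1]f1 -[a2]f2 -[a3]f3 -!frU3' // -!frM -!frD E1 fr0.
set x1 := u1 ^+ 3; set x2 := u2 ^+ 3; set x3 := u3 ^+ 3.
set w1 := u1^-1 ^+ 3; set w2 := u2^-1 ^+ 3; set w3 := u3^-1 ^+ 3.
set y1 := u1 ^+ 5; set y2 := u2 ^+ 5; set y3 := u3 ^+ 5.
pose z1 := x2*w3-x3*w2; pose z2 := x3*w1-x1*w3; pose z3 := x1*w2-x2*w1.
pose Z := z1*y1+z2*y2+z3*y3.
have key : a1 * Z = z1 * (a1*y1+a2*y2+a3*y3) + y2*(x3*(a1*w1+a2*w2+a3*w3) - w3*(a1*x1+a2*x2+a3*x3))
   - y3*(x2*(a1*w1+a2*w2+a3*w3)-w2*(a1*x1+a2*x2+a3*x3)).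
  rewrite /Z /z1 /z2 /z3; ring.
rewrite E1 E2 E3 in key; have {}key : a1 * Z = 0 by rewrite key; ring.
have ZT : (u1 * u2 * u3) ^+ 3 * Z = (Tf u1 u2 u3) ^+ 2.
  have e1 := mulfV (U_neq0 h1); have e2 := mulfV (U_neq0 h2); have e3 := mulfV (U_neq0 h3).
  move: e1 e2 e3; rewrite /Z /z1 /z2 /z3 /x1 /x2 /x3 /w1 /w2 /w3 /y1 /y2 /y3 /Tf.
  set W1 := u1^-1; set W2 := u2^-1; set W3 := u3^-1 => e1 e2 e3.
  apply/eqP; rewrite -subr_eq0; apply/eqP.
  have g1 : u1*W1 - 1 = 0 by rewrite e1 subrr.
  have g2 : u2*W2 - 1 = 0 by rewrite e2 subrr.
  have g3 : u3*W3 - 1 = 0 by rewrite e3 subrr.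
  transitivity ((u1*W1 - 1) * (- u2^+6*u3^+8 + u2^+8*u3^+6 - u1*u2^+6*u3^+8*W1 + u1*u2^+8*u3^+6*W1 - u1^+2*u2^+6*u3^+8*W1^+2 + u1^+2*u2^+8*u3^+6*W1^+2) + (u2*W2 - 1) * (u1^+6*u3^+8 + u1^+6*u2*u3^+8*W2 + u1^+6*u2^+2*u3^+8*W2^+2 - u1^+8*u3^+6 - u1^+8*u2*u3^+6*W2 - u1^+8*u2^+2*u3^+6*W2^+2) + (u3*W3 - 1) * (- u1^+6*u2^+8 - u1^+6*u2^+8*u3*W3 - u1^+6*u2^+8*u3^+2*W3^+2 + u1^+8*u2^+6 + u1^+8*u2^+6*u3*W3 + u1^+8*u2^+6*u3^+2*W3^+2) + 2 * (- u2^+6*u3^+8 - u2^+7*u3^+7 - u1^+3*u2^+3*u3^+8 - u1^+3*u2^+4*u3^+7 - u1^+3*u2^+7*u3^+4 - u1^+3*u2^+8*u3^+3 - u1^+4*u2^+3*u3^+7 - u1^+4*u2^+4*u3^+6 - u1^+4*u2^+6*u3^+4 - u1^+4*u2^+7*u3^+3 - u1^+6*u2^+4*u3^+4 - u1^+6*u2^+8 - u1^+7*u3^+7 - u1^+7*u2^+3*u3^+4 - u1^+7*u2^+4*u3^+3 - u1^+7*u2^+7 - u1^+8*u3^+6 - u1^+8*u2^+3*u3^+3)).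
    ring.
  rewrite g1 g2 g3 char2; ring.
have : Z != 0.
  apply/negP => /eqP Z0; move: ZT; rewrite Z0 mulr0 => /esym /eqP.
  by rewrite expf_eq0 /= (negbTE (Tnz h1 h2 h3 d12 d13 d23)).
by move=> Znz; move/eqP: key; rewrite mulf_eq0 (negbTE Znz) orbF => /eqP.
Qed.
Lemma fresh (x y : F) : exists2 z, z \in U & (z != x) && (z != y).
Proof.
case: (pickP (fun z => (z \in U) && ((z != x) && (z != y)))) => [z /andP [h1 h2] | hn].
  by exists z.
exfalso.
have : (#|U| <= #|[set x; y]|)%N.
  apply: subset_leq_card; apply/subsetP => z zU; have := hn z; rewrite zU /=.
  by move=> /negbT; rewrite negb_and !negbK !inE.
rewrite card_U cards2; have := q_ge16; case: (x != y) => /=; lia.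
Qed.

Lemma core3' (a1 a2 a3 u1 u2 u3 : F) :
  fr a1 = a1 -> fr a2 = a2 -> fr a3 = a3 ->
  u1 \in U -> u2 \in U -> u3 \in U ->
  (a2 != 0 -> u1 != u2) -> (a3 != 0 -> u1 != u3) -> (a2 != 0 -> a3 != 0 -> u2 != u3) ->
  a1 * u1 ^+ 3 + a2 * u2 ^+ 3 + a3 * u3 ^+ 3 = 0 ->
  a1 * u1 ^+ 5 + a2 * u2 ^+ 5 + a3 * u3 ^+ 5 = 0 -> a1 = 0.
Proof.
move=> f1 f2 f3 h1 h2 h3 d12 d13 d23 E1 E2.
have f0 := fr0.
case: (eqVneq a2 0) => [a20 | a2n]; case: (eqVneq a3 0) => [a30 | a3n].
- have [z zU /andP [z1 _]] := fresh u1 u1.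
  have [z' zU' /andP [z1' z2']] := fresh u1 z.
  subst a2 a3.
  apply: (core3 f1 f0 f0 h1 zU zU' _ _ _ _ _);
    [by rewrite eq_sym | by rewrite eq_sym | by rewrite eq_sym
    | by move: E1; rewrite !mul0r !addr0 | by move: E2; rewrite !mul0r !addr0].
- have [z zU /andP [z1 z3]] := fresh u1 u3.
  subst a2.
  apply: (core3 f1 f0 f3 h1 zU h3 _ _ _ _ _);
    [by rewrite eq_sym | exact: d13 | by []
    | by move: E1; rewrite !mul0r !addr0 | by move: E2; rewrite !mul0r !addr0].
- have [z zU /andP [z1 z2]] := fresh u1 u2.
  subst a3.
  apply: (core3 f1 f2 f0 h1 h2 zU _ _ _ _ _);
    [exact: d12 | by rewrite eq_sym | by rewrite eq_sym
    | by move: E1; rewrite !mul0r !addr0 | by move: E2; rewrite !mul0r !addr0].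
- by apply: (core3 f1 f2 f3 h1 h2 h3) => //; [apply: d12 | apply: d13 | apply: d23].
Qed.

Lemma lowwt (c : 'rV[K]_n) : c \in C -> c != 0 -> (4 <= wt c)%N.
Proof.
rewrite memC => /andP [/eqP h3 /eqP h5] cn0.
rewrite leqNgt; apply/negP => hw.
pose S := [set i | c ord0 i != 0].
have wS : wt c = size (enum S) by rewrite /wt cardE.
have sumS : forall h, Sk c h = \sum_(i <- enum S) iota (c ord0 i) * h (enum_val i).
  move=> h; rewrite big_enum /Sk (bigID (fun i => c ord0 i != 0)) /= [X in _ + X]big1 ?addr0.
    by apply: eq_bigl => i; rewrite inE.
  by move=> i /negbNE /eqP ->; rewrite rmorph0 mul0r.
have hS : forall i, i \in enum S -> c ord0 i != 0 by move=> i; rewrite mem_enum inE.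
have uS := enum_uniq (mem S).
have fa : forall i, fr (iota (c ord0 i)) = iota (c ord0 i) by move=> i; exact: fr_iota.
have vU : forall i : 'I_n, enum_val i \in U by move=> i; exact: enum_valP.
have vinj : forall i j : 'I_n, i != j -> enum_val i != enum_val j.
  by move=> i j; apply: contra => /eqP /enum_val_inj ->.
have nz : forall i, c ord0 i != 0 -> iota (c ord0 i) != 0 by move=> i; rewrite fmorph_eq0.
have f0 := fr0.
rewrite wS in hw; move: h3 h5 hw hS uS; rewrite !sumS.
case E: (enum S) => [|i1 [|i2 [|i3 [|i4 s]]]] /=.
- move=> _ _ _ _ _; apply: (negP cn0); apply/eqP/rowP => j; rewrite mxE.
  apply/eqP; apply/negPn/negP => hj.
  have : j \in enum S by rewrite mem_enum inE.
  by rewrite E.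
- rewrite !big_cons !big_nil !addr0 => E1 E2 _ hS _.
  have := hS i1 (mem_head _ _) => /nz; apply/negP/negPn/eqP.
  apply: (core3' (fa i1) f0 f0 (vU i1) (vU i1) (vU i1) _ _ _ _ _);
    [by rewrite eqxx | by rewrite eqxx | by rewrite eqxx
    | by rewrite !mul0r !addr0 | by rewrite !mul0r !addr0].
- rewrite !big_cons !big_nil !addr0 ?addrA => E1 E2 _ hS.
  rewrite andbT inE => d12.
  have := hS i1 (mem_head _ _) => /nz; apply/negP/negPn/eqP.
  apply: (core3' (fa i1) (fa i2) f0 (vU i1) (vU i2) (vU i1) _ _ _ _ _);
    [by move=> _; apply: vinj | by rewrite eqxx | by rewrite eqxx
    | by rewrite !mul0r !addr0 | by rewrite !mul0r !addr0].
- rewrite !big_cons !big_nil !addr0 ?addrA => E1 E2 _ hS.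
  rewrite /= !inE negb_or => /andP [/andP [d12 d13] /andP [d23 _]].
  have := hS i1 (mem_head _ _) => /nz; apply/negP/negPn/eqP.
  by apply: (core3' (fa i1) (fa i2) (fa i3) (vU i1) (vU i2) (vU i3) _ _ _ E1 E2);
    move=> *; apply: vinj.
- by [].
Qed.
Lemma C1 (u W om : F) : u * W - 1 = 0 -> om ^+ 2 + om + 1 = 0 ->
  om^+2*(W+om)*(om^+2*(u+om)) = (W+om^+2)*(u+om^+2).
Proof.
move=> g1 g2.
apply/eqP; rewrite -subr_eq0; apply/eqP.
transitivity ((u*W - 1) * (- 1 + om^+4) + (om^+2 + om + 1) * (- 1 + om - om^+3 + om^+4 - W*om^+2 + W*om^+3 - u*om^+2 + u*om^+3) + 2 * 0).
  ring.
by rewrite g1 g2 char2; ring.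
Qed.

Lemma C2 (u om : F) : om ^+ 2 + om + 1 = 0 ->
  ((om^+2*(u+om))^+2 + (u+om^+2)^+2)*(u^+2+u+1) = (u^+2+1)*(om^+2*(u+om))*(u+om^+2).
Proof.
move=> g2.
apply/eqP; rewrite -subr_eq0; apply/eqP.
transitivity ((om^+2 + om + 1) * (- 2%:R + 2%:R*om^+2 - 2%:R*om^+3 + om^+4 + 4%:R*u - 2%:R*u*om^+2 + u*om^+3 + u*om^+4 + u^+2 - u^+2*om + u^+2*om^+2 + u^+2*om^+4 + 5%:R*u^+3 - u^+3*om - 2%:R*u^+3*om^+2 + 2%:R*u^+3*om^+3 - u^+4 - u^+4*om + u^+4*om^+2) + 2 * (1 + om - 2%:R*u - 2%:R*u*om - 2%:R*u^+3 - 2%:R*u^+3*om + u^+4 + u^+4*om)).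
  ring.
by rewrite g2 char2; ring.
Qed.

Lemma C3 (x W : F) : x * W - 1 = 0 -> x^+3 + W^+3 = (x+W)*(x+W+1)^+2.
Proof.
move=> g1.
apply/eqP; rewrite -subr_eq0; apply/eqP.
transitivity ((x*W - 1) * (- 4%:R - 3%:R*W - 3%:R*x) + 2 * (- 2%:R - 2%:R*W - W^+2 - 2%:R*x - x^+2)).
  ring.
by rewrite g1 char2; ring.
Qed.

Lemma C4 (x W : F) : x * W - 1 = 0 -> x^+5 + W^+5 = (x+W)*((x+W)^+2+(x+W)+1)^+2.
Proof.
move=> g1.
apply/eqP; rewrite -subr_eq0; apply/eqP.
transitivity ((x*W - 1) * (- 16%:R - 19%:R*W - 8%:R*W^+2 - 5%:R*W^+3 - 19%:R*x - 12%:R*x*W - 10%:R*x*W^+2 - 8%:R*x^+2 - 10%:R*x^+2*W - 5%:R*x^+3) + 2 * (- 8%:R - 10%:R*W - 5%:R*W^+2 - 4%:R*W^+3 - W^+4 - 10%:R*x - 5%:R*x^+2 - 4%:R*x^+3 - x^+4)).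
  ring.
by rewrite g1 char2; ring.
Qed.

Lemma C5 (wu wv : F) : wv * wu + wv - wu = 0 ->
  wv*(wv+1)^+2*(wu*(wu^+2+wu+1)^+2) + wu*(wu+1)^+2*(wv*(wv^+2+wv+1)^+2) = 0.
Proof.
move=> g1.
apply/eqP; rewrite -subr_eq0; apply/eqP.
transitivity ((wv*wu + wv - wu) * (30%:R + 10%:R*wv + 2%:R*wv^+2 - 18%:R*wu - 4%:R*wu*wv + 2%:R*wu*wv^+2 + 2%:R*wu*wv^+3 + wu*wv^+4 + 18%:R*wu^+2 + 14%:R*wu^+2*wv + 8%:R*wu^+2*wv^+2 + 3%:R*wu^+2*wv^+3 + wu^+2*wv^+4 + 2%:R*wu^+3*wv + wu^+3*wv^+2 + 4%:R*wu^+4 + 3%:R*wu^+4*wv + wu^+4*wv^+2) + 2 * (- 15%:R*wv - 5%:R*wv^+2 - wv^+3 + 15%:R*wu - 9%:R*wu^+2 + 9%:R*wu^+3 + 2%:R*wu^+5)).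
  ring.
by rewrite g1 char2; ring.
Qed.
Lemma q3j : exists j, q = (3 * j + 1)%N.
Proof. by exists (q %/ 3)%N; rewrite {1}(divn_eq q 3) q_mod3 mulnC. Qed.

Lemma omega_ex : exists om : F, [/\ om ^+ 2 + om + 1 = 0, om ^+ 3 = 1, om != 1 & fr om = om].
Proof.
have [j hj] := q3j.
pose k := (3 * j * j + 2 * j)%N.
have hk : ((3 * k).+1 = q * q)%N by rewrite hj /k; nia.
have j5 : (5 <= j)%N by have := q_ge16; rewrite hj; lia.
have [x hx] : exists x : F, x ^+ k.+1 != x.
  case: (pickP (fun x : F => x ^+ k.+1 != x)) => [x h | hn]; first by exists x.
  exfalso.
  have : (#|[set: F]| < size (('X^(k.+1) - 'X)%R : {poly F}))%N.
    apply: roots_card.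
      by rewrite -size_poly_eq0 size_polyDl ?size_polyXn // size_polyN size_polyX; lia.
    by move=> y _; have := hn y; move/negbFE/eqP; rewrite rootE !hornerE => ->; rewrite subrr.
  rewrite cardsT cF -hk size_polyDl ?size_polyXn ?size_polyN ?size_polyX; lia.
have x0 : x != 0 by apply: contraNneq hx => ->; rewrite expr0n.
pose om := x ^+ k.
have o3 : om ^+ 3 = 1.
  have : x ^+ (3 * k).+1 = x by rewrite hk -cF expf_card.
  rewrite exprS -exprM mulnC => h; apply: (mulfI x0); by rewrite h mulr1.
have o1 : om != 1 by apply: contraNneq hx => e; rewrite exprSr -/om e mul1r.
exists om; split => //.
- have : (om - 1) * (om ^+ 2 + om + 1) = 0 by rewrite (_ : _ * _ = om ^+ 3 - 1); [rewrite o3 subrr | ring].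
  by move/eqP; rewrite mulf_eq0 subr_eq0 (negbTE o1) /= => /eqP.
- by rewrite /fr hj exprD exprM o3 expr1n mul1r expr1.
Qed.

Lemma sum4 (R : Type) (idx : R) (op : Monoid.com_law idx) (G : F -> R) (x1 x2 x3 x4 : F) :
  x1 \in U -> x2 \in U -> x3 \in U -> x4 \in U -> uniq [:: x1; x2; x3; x4] ->
  (forall x, x \in U -> x \notin [:: x1; x2; x3; x4] -> G x = idx) ->
  \big[op/idx]_(x in U) G x = op (G x1) (op (G x2) (op (G x3) (G x4))).
Proof.
move=> h1 h2 h3 h4 /= hu hG.
move: hu; rewrite !inE !negb_or => /andP [/and3P [d12 d13 d14] /andP [/andP [d23 d24] /andP [d34 _]]].
rewrite (bigD1 x1) //= (bigD1 x2) /=; last by rewrite h2 eq_sym d12.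
rewrite (bigD1 x3) /=; last by rewrite h3 eq_sym d13 eq_sym d23.
rewrite (bigD1 x4) /=; last by rewrite h4 eq_sym d14 eq_sym d24 eq_sym d34.
rewrite big1 ?Monoid.mulm1 // => x /andP [/andP [/andP [/andP [xU n1] n2] n3] n4].
by apply: hG => //; rewrite !inE !negb_or n1 n2 n3 n4.
Qed.
Lemma inv_neq x : x \in U -> x != 1 -> x != x^-1.
Proof.
move=> xU x1; apply/negP => /eqP e.
have : x ^+ 2 = 1 ^+ 2 by rewrite expr1n expr2 {2}e mulfV // U_neq0.
by move/sqr_inj/eqP; rewrite (negbTE x1).
Qed.

Lemma f3nz x : x \in U -> x != 1 -> x ^+ 3 + x^-1 ^+ 3 != 0.
Proof.
move=> xU x1; apply/negP => /eqP e.
have x0 := U_neq0 xU.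
have e3 : x ^+ 3 = x^-1 ^+ 3 by apply/eqP; rewrite -addF_eq0 e.
have : (x ^+ 3) ^+ 2 = 1 ^+ 2.
  by rewrite expr1n expr2 {2}e3 -exprMn mulfV // expr1n.
move/sqr_inj => h; have : x ^+ 3 = 1 ^+ 3 by rewrite h expr1n.
by move/(cube_inj xU U1)/eqP; rewrite (negbTE x1).
Qed.

Lemma w4 : exists2 c, c \in C & c != 0 /\ wt c = 4%N.
Proof.
have [om [o2 o3 o1 fo]] := omega_ex.
have [j hj] := q3j.
have [u uU /andP [u1 _]] := fresh 1 1.
have u0 := U_neq0 uU.
have om2nU : forall y, y \in U -> y != om ^+ 2.
  move=> y yU; apply/negP => /eqP e; move: yU; rewrite e inU -exprM hj.
  rewrite (_ : (2 * (3 * j + 1).+1 = 3 * (2 * j + 1) + 1)%N); last lia.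
  by rewrite exprD exprM o3 expr1n mul1r expr1 (negbTE o1).
pose D := u + om ^+ 2.
have D0 : D != 0 by rewrite /D addF_eq0 om2nU.
have D'0 : u^-1 + om ^+ 2 != 0 by rewrite addF_eq0 om2nU // UV.
pose N := om ^+ 2 * (u + om).
pose v := N / D.
have om0 : om != 0.
  by apply/negP => /eqP e; move: o3; rewrite e expr0n => /eqP; rewrite eq_sym oner_eq0.
have frv : fr v = om ^+ 2 * (u^-1 + om) / (u^-1 + om ^+ 2).
  by rewrite /v /N /D (frM (om ^+ 2 * (u + om))) frV (frM (om ^+ 2)) !frD frX fo frU.
have gW : u * u^-1 - 1 = 0 by rewrite mulfV // subrr.
have vU : v \in U.
  rewrite inU exprSr -[v ^+ q]/(fr v) frv /v mulf_div.
  by rewrite /N /D (C1 gW o2) divff // mulf_neq0.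
have v0 := U_neq0 vU.
have vD : v * D = N by rewrite /v divfK.
have N0 : N != 0 by rewrite -vD mulf_neq0.
have o3' : om ^+ 3 - 1 = 0 by rewrite o3 subrr.
have v1 : v != 1.
  apply/negP => /eqP e; move: vD; rewrite e mul1r /D /N => h.
  have h' : u + om ^+ 2 - om ^+ 2 * (u + om) = 0 by rewrite h subrr.
  have : (u + 1) * (om ^+ 2 + 1) = 0.
    transitivity ((u + om^+2 - om^+2*(u+om)) + 2*(u*om^+2) + (om^+3 - 1) + 2); first ring.
    by rewrite h' o3' char2 mul0r !addr0.
  move/eqP; rewrite mulf_eq0 !addF_eq0 (negbTE u1) /= => /eqP e2.
  by move: o1; rewrite -o3 exprS e2 mulr1 eqxx.
have sq1 : u ^+ 2 = 1 -> False.
  by move=> e; move: e; rewrite -(expr1n F 2) => /sqr_inj /eqP; rewrite (negbTE u1).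
have vu : v != u.
  apply/negP => /eqP e; move: vD; rewrite e /D /N => h.
  have h' : u * (u + om ^+ 2) - om ^+ 2 * (u + om) = 0 by rewrite h subrr.
  apply: sq1; apply/eqP; rewrite -subr_eq0; apply/eqP.
  transitivity ((u * (u + om ^+ 2) - om ^+ 2 * (u + om)) + (om^+3 - 1)); first ring.
  by rewrite h' o3' addr0.
have vui : v != u^-1.
  apply/negP => /eqP e; move: vD; rewrite e /D /N => h.
  have h' : u * (om ^+ 2 * (u + om)) - (u + om ^+ 2) = 0.
    by rewrite -h mulrA mulfV // mul1r subrr.
  apply: sq1; apply/eqP; rewrite -subr_eq0; apply/eqP.
  apply: (mulfI (expf_neq0 2 om0)); rewrite mulr0.
  transitivity ((u * (om ^+ 2 * (u + om)) - (u + om ^+ 2)) - u * (om^+3 - 1)); first ring.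
  by rewrite h' o3' mulr0 subrr.
have uui := inv_neq uU u1.
have vvi := inv_neq vU v1.
have hl : uniq [:: u; u^-1; v; v^-1].
  rewrite /= !inE !negb_or uui (eq_sym u v) vu (eq_sym u^-1 v) vui vvi (inj_eq invr_inj) (eq_sym u v) vu /= andbT.
  by apply: contra vui => /eqP ->; rewrite invrK.
pose a := v ^+ 3 + v^-1 ^+ 3.
pose b := u ^+ 3 + u^-1 ^+ 3.
have fa : fr a = a by rewrite /a frD frU3 // frU3' // addrC.
have fb : fr b = b by rewrite /b frD frU3 // frU3' // addrC.
have a0 : a != 0 := f3nz vU v1.
have b0 : b != 0 := f3nz uU u1.
pose g (x : F) : K := if (x == u) || (x == u^-1) then iinv a
  else if (x == v) || (x == v^-1) then iinv b else 0.
have gu : iota (g u) = a by rewrite /g eqxx /= iinvK.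
have gui : iota (g u^-1) = a by rewrite /g eqxx orbT /= iinvK.
have gv : iota (g v) = b.
  by rewrite /g (negbTE vu) (negbTE vui) eqxx /= iinvK.
have gvi : iota (g v^-1) = b.
  have h1 : (v^-1 == u) = false.
    by apply/negbTE; apply: contra vui => /eqP <-; rewrite invrK.
  have h2 : (v^-1 == u^-1) = false by rewrite (inj_eq invr_inj) (negbTE vu).
  by rewrite /g h1 h2 eqxx orbT /= iinvK.
have g0 : forall x, x \notin [:: u; u^-1; v; v^-1] -> g x = 0.
  move=> x; rewrite !inE !negb_or => /and4P [n1 n2 n3 n4].
  by rewrite /g (negbTE n1) (negbTE n2) (negbTE n3) (negbTE n4).
pose c : 'rV[K]_n := \row_i g (enum_val i).
have Sc : forall h, Sk c h = a * h u + (a * h u^-1 + (b * h v + b * h v^-1)).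
  move=> h; rewrite /c Sk_row (sum4 _ uU (UV uU) vU (UV vU) hl).
    by rewrite gu gui gv gvi.
  by move=> x _ /g0 ->; rewrite rmorph0 mul0r.
have Cc : c \in C.
  rewrite memC !Sc; apply/andP; split.
    rewrite addrA addrA -mulrDr -addrA -mulrDr -/b -/a mulrC add2 //.
  apply/eqP; rewrite addrA addrA -mulrDr -addrA -mulrDr.
  have gv' : v * v^-1 - 1 = 0 by rewrite mulfV // subrr.
  rewrite /a /b !C3 // !C4 //.
  set wu := u + u^-1; set wv := v + v^-1.
  apply: C5.
  have num : (N^+2 + D^+2)*(u^+2+u+1) - (u^+2+1)*N*D = 0 by rewrite /N /D C2 // subrr.
  have -> : wv * wu + wv - wu = ((N^+2 + D^+2)*(u^+2+u+1) - (u^+2+1)*N*D) / (N*D*u).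
    rewrite /wv /wu /v invf_div; field.
    by rewrite N0 D0 u0.
  by rewrite num mul0r.
have wc : wt c = 4%N.
  rewrite /wt.
  have -> : #|[set i | c ord0 i != 0]| = (\sum_(i < n) (if g (enum_val i) != 0%R then 1 else 0))%N.
    by rewrite -[LHS]sum1_card big_mkcond; apply: eq_bigr => i _; rewrite inE mxE.
  rewrite -(big_enum_val (fun x => if g x != 0%R then 1 else 0)%N).
  rewrite (sum4 _ uU (UV uU) vU (UV vU) hl); last by move=> x _ /g0 ->; rewrite eqxx.
  have nz : forall x, iota (g x) != 0 -> g x != 0 by move=> x; rewrite fmorph_eq0.
  by rewrite nz ?gu // nz ?gui // nz ?gv // nz ?gvi.
exists c => //; split => //.
apply/negP => /eqP c0; move: wc; rewrite c0 /wt.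
rewrite (_ : [set i | (0 : 'rV[K]_n) ord0 i != 0] = set0) ?cards0 //.
by apply/setP => i; rewrite !inE mxE eqxx.
Qed.
Lemma main_sec : [/\ ulen F q = q.+1, is_linear_code (subcode35 iota q),
  code_dim (subcode35 iota q) = (q - 3)%N & min_dist_is (subcode35 iota q) 4].
Proof. split; [exact: card_U | exact: linC | exact: dim_C | split; [exact: w4 | exact: lowwt]]. Qed.

End Main.

Theorem theorem21 (m : nat) (K F : finFieldType) (iota : {rmorphism K -> F}) :
  (4 <= m)%N -> ~~ odd m -> #|K| = (2 ^ m)%N -> #|F| = (2 ^ m * 2 ^ m)%N ->
  let q := (2 ^ m)%N in
  let C := subcode35 iota q in
  [/\ ulen F q = q.+1,
      is_linear_code C,
      code_dim C = (q - 3)%N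
    & min_dist_is C 4].
Proof.
move=> h1 h2 h3 h4 q C; rewrite /q /C.
exact: main_sec.
Qed.
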